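(* Fix an event set $\hat\Sigma$, a function $\hat\Sigma_{uc}:\hat\Sigma\to NCFD$, and a bi-fuzzy language $\hat M$ with $pr(\hat M)=\hat M$; controllability below is with respect to $\hat M$ and $\hat\Sigma_{uc}$. Let $\hat K_1,\hat K_2$ be bi-fuzzy languages over $\hat\Sigma$. Then: 1) if $\hat K_1$ and $\hat K_2$ are bi-fuzzy controllable, then $\hat K_1\cup\hat K_2$ is bi-fuzzy controllable; 2) if $pr(\hat K_1)=\hat K_1$ and $pr(\hat K_2)=\hat K_2$, then $pr(\hat K_1\cup\hat K_2)=\hat K_1\cup\hat K_2$; 3) if $\hat K_1$ and $\hat K_2$ are bi-fuzzy controllable and $pr(\hat K_1)\cap pr(\hat K_2)=pr(\hat K_1\cap\hat K_2)$, then $\hat K_1\cap\hat K_2$ is bi-fuzzy controllable; 4) if $pr(\hat K_i)=\hat K_i$ and $\hat K_i$ is bi-fuzzy controllable for $i=1,2$, then $pr(\hat K_1)\cap pr(\hat K_2)=pr(\hat K_1\cap\hat K_2)$ and $\hat K_1\cap\hat K_2$ is bi-fuzzy controllable.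
   Context: $NCFD$ is the set of normal convex type-1 fuzzy sets $\mu:[0,1]\to[0,1]$ ($\max_u\mu(u)=1$, and $\mu(u_j)\ge\min\{\mu(u_i),\mu(u_k)\}$ for $u_i\le u_j\le u_k$). Operations: $(\mu_1\sqcup\mu_2)(v)=\sup\{\min(\mu_1(u),\mu_2(w)):\max(u,w)=v\}$, $(\mu_1\sqcap\mu_2)(v)=\sup\{\min(\mu_1(u),\mu_2(w)):\min(u,w)=v\}$; for arbitrary families, $(\bigsqcup_{i\in I}\mu_i)(v)=\sup\{\inf_i\mu_i(u_i):\sup_i u_i=v\}$. $\mu_1\sqsubseteq\mu_2$ iff $\mu_1\sqcap\mu_2=\mu_1$. A bi-fuzzy language over $\hat\Sigma$ is a function $\hat\Sigma^*\to NCFD$; $(\hat L\cap\hat H)(s)=\hat L(s)\sqcap\hat H(s)$, $(\hat L\cup\hat H)(s)=\hat L(s)\sqcup\hat H(s)$, $\hat L\subseteq\hat H$ iff $\hat L(s)\sqsubseteq\hat H(s)$ for all $s$. Prefix closure: $pr(\hat K)(s)=\bigsqcup_{u\in\hat\Sigma^*}\hat K(su)$. A bi-fuzzy language $\hat K$ with $\hat K\subseteq\hat M$ is bi-fuzzy controllable (w.r.t. $\hat M$ and $\hat\Sigma_{uc}$) if for all $s\in\hat\Sigma^*$, $\sigma\in\hat\Sigma$: $pr(\hat K)(s)\sqcap\hat\Sigma_{uc}(\sigma)\sqcap\hat M(s\sigma)\sqsubseteq pr(\hat K)(s\sigma)$. *)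

(* Defs.v *)
From Stdlib Require Import Reals List.
From Coquelicot Require Import Coquelicot.
Open Scope R_scope.

Definition I01 : Type := { x : R | 0 <= x <= 1 }.
Definition ival (u : I01) : R := proj1_sig u.

Definition fuzzy : Type := I01 -> R.

(* total supremum / infimum of a set of reals (meaningful for nonempty bounded sets) *)
Definition fsup (E : R -> Prop) : R := real (Lub_Rbar E).
Definition finf (E : R -> Prop) : R := real (Glb_Rbar E).

Definition is_NCFD (mu : fuzzy) : Prop :=
  (forall u, 0 <= mu u <= 1) /\
  (exists u, mu u = 1) /\
  (forall ui uj uk : I01, ival ui <= ival uj <= ival uk ->
      Rmin (mu ui) (mu uk) <= mu uj).

Definition fjoin (mu1 mu2 : fuzzy) : fuzzy := fun v =>
  fsup (fun r => exists u w : I01,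
          Rmax (ival u) (ival w) = ival v /\ r = Rmin (mu1 u) (mu2 w)).
Definition fmeet (mu1 mu2 : fuzzy) : fuzzy := fun v =>
  fsup (fun r => exists u w : I01,
          Rmin (ival u) (ival w) = ival v /\ r = Rmin (mu1 u) (mu2 w)).

Definition fbigjoin {I : Type} (mu : I -> fuzzy) : fuzzy := fun v =>
  fsup (fun r => exists uu : I -> I01,
          fsup (fun x => exists i, x = ival (uu i)) = ival v /\
          r = finf (fun y => exists i, y = mu i (uu i))).

Definition fle (mu1 mu2 : fuzzy) : Prop := fmeet mu1 mu2 = mu1.

Definition lang (Sigma : Type) : Type := list Sigma -> fuzzy.

Definition linter {Sigma} (L H : lang Sigma) : lang Sigma := fun s => fmeet (L s) (H s).
Definition lunion {Sigma} (L H : lang Sigma) : lang Sigma := fun s => fjoin (L s) (H s).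
Definition lsub {Sigma} (L H : lang Sigma) : Prop := forall s, fle (L s) (H s).

Definition pr {Sigma} (K : lang Sigma) : lang Sigma :=
  fun s => fbigjoin (fun u : list Sigma => K (s ++ u)).

Definition controllable {Sigma} (M : lang Sigma) (Suc : Sigma -> fuzzy) (K : lang Sigma) : Prop :=
  lsub K M /\
  forall (s : list Sigma) (a : Sigma),
    fle (fmeet (fmeet (pr K s) (Suc a)) (M (s ++ a :: nil))) (pr K (s ++ a :: nil)).

(* Main.v *)
Require Import Defs.
From Stdlib Require Import Reals List Lra.
From Stdlib Require Import FunctionalExtensionality ProofIrrelevance IndefiniteDescription Classical.
From Coquelicot Require Import Coquelicot.
Open Scope R_scope.

Ltac mm := unfold Rmin, Rmax in *; repeat (match goal with
  | |- context [Rle_dec ?a ?b] => destruct (Rle_dec a b)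
  | H : context [Rle_dec ?a ?b] |- _ => destruct (Rle_dec a b)
  end); lra.

Lemma fsup_spec (E : R -> Prop) (m x0 : R) :
  E x0 -> (forall y, E y -> y <= m) ->
  (forall x, E x -> x <= fsup E) /\ (forall b, (forall y, E y -> y <= b) -> fsup E <= b).
Proof.
  intros H0 Hm. unfold fsup.
  generalize (Lub_Rbar_correct E). generalize (Lub_Rbar E). intros L [Hub Hl].
  assert (Hle : Rbar_le L (Finite m)) by (apply Hl; intros y Hy; simpl; auto).
  assert (Hge : Rbar_le (Finite x0) L) by (apply Hub; auto).
  destruct L as [l| |]; try (simpl in Hle, Hge; contradiction).
  split.
  - intros x Hx. exact (Hub x Hx).
  - intros b Hb. exact (Hl (Finite b) (fun y Hy => Hb y Hy)).
Qed.

Lemma finf_spec (E : R -> Prop) (m x0 : R) :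
  E x0 -> (forall y, E y -> m <= y) ->
  (forall x, E x -> finf E <= x) /\ (forall b, (forall y, E y -> b <= y) -> b <= finf E).
Proof.
  intros H0 Hm. unfold finf.
  generalize (Glb_Rbar_correct E). generalize (Glb_Rbar E). intros L [Hlb Hg].
  assert (Hle : Rbar_le (Finite m) L) by (apply Hg; intros y Hy; simpl; auto).
  assert (Hge : Rbar_le L (Finite x0)) by (apply Hlb; auto).
  destruct L as [l| |]; try (simpl in Hle, Hge; contradiction).
  split.
  - intros x Hx. exact (Hlb x Hx).
  - intros b Hb. exact (Hg (Finite b) (fun y Hy => Hb y Hy)).
Qed.

Lemma fsup_wit E m x0 r : E x0 -> (forall y, E y -> y <= m) -> r < fsup E -> exists x, E x /\ r < x.
Proof.
  intros H0 Hm Hr. destruct (fsup_spec E m x0 H0 Hm) as [_ Hl].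
  apply NNPP; intro Hn. assert (fsup E <= r).
  { apply Hl. intros y Hy. apply Rnot_lt_le. intro. apply Hn. eauto. }
  lra.
Qed.

Lemma le_by_r X Y : (forall r, r < X -> r <= Y) -> X <= Y.
Proof. intros H. destruct (Rle_lt_dec X Y); auto. assert (H1 := H ((X+Y)/2) ltac:(lra)). lra. Qed.

Lemma rmin_ge r a b : r <= a -> r <= b -> r <= Rmin a b.
Proof. intros; mm. Qed.

Lemma choice_ex {A B : Type} (R0 : A -> B -> Prop) : (forall x, exists y, R0 x y) -> exists f, forall x, R0 x (f x).
Proof.
  intros H. exists (fun x => proj1_sig (constructive_indefinite_description _ (H x))).
  intros x. exact (proj2_sig (constructive_indefinite_description _ (H x))).
Qed.

Lemma ival_inj (u w : I01) : ival u = ival w -> u = w.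
Proof. destruct u as [x px], w as [y py]; simpl; intros ->. f_equal. apply proof_irrelevance. Qed.
Lemma ival_bounds (u : I01) : 0 <= ival u <= 1. Proof. destruct u; simpl; auto. Qed.

Lemma minI_pf (u w : I01) : 0 <= Rmin (ival u) (ival w) <= 1.
Proof. pose proof (ival_bounds u); pose proof (ival_bounds w); split; mm. Qed.
Definition minI u w : I01 := exist _ _ (minI_pf u w).
Lemma maxI_pf (u w : I01) : 0 <= Rmax (ival u) (ival w) <= 1.
Proof. pose proof (ival_bounds u); pose proof (ival_bounds w); split; mm. Qed.
Definition maxI u w : I01 := exist _ _ (maxI_pf u w).

Definition B01 (f : fuzzy) := forall u, 0 <= f u <= 1.
Definition cvx (f : fuzzy) := forall ui uj uk : I01, ival ui <= ival uj <= ival uk ->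
      Rmin (f ui) (f uk) <= f uj.

Definition supset {I} (uu : I -> I01) : R -> Prop := fun x => exists i, x = ival (uu i).
Definition infset {I} (mu : I -> fuzzy) (uu : I -> I01) : R -> Prop := fun y => exists i, y = mu i (uu i).

Lemma supset_spec {I} (i0 : I) (uu : I -> I01) :
  (forall i, ival (uu i) <= fsup (supset uu)) /\
  (forall b, (forall i, ival (uu i) <= b) -> fsup (supset uu) <= b).
Proof.
  destruct (fsup_spec (supset uu) 1 (ival (uu i0))) as [Hu Hl].
  - exists i0; reflexivity.
  - intros y [i ->]. apply ival_bounds.
  - split. intros i; apply Hu; exists i; reflexivity.
    intros b Hb; apply Hl; intros y [i ->]; auto.
Qed.

Lemma supset_eq_iff {I} (i0 : I) (uu : I -> I01) v :
  fsup (supset uu) = ival v <->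
  ((forall i, ival (uu i) <= ival v) /\ (forall b, (forall i, ival (uu i) <= b) -> ival v <= b)).
Proof.
  destruct (supset_spec i0 uu) as [Hu Hl]. split.
  - intros <-. split; auto.
  - intros [H1 H2]. apply Rle_antisym; auto.
Qed.

Lemma supI_pf {I} (i0 : I) (uu : I -> I01) : 0 <= fsup (supset uu) <= 1.
Proof.
  destruct (supset_spec i0 uu) as [Hu Hl]. split.
  - pose proof (Hu i0); pose proof (ival_bounds (uu i0)); lra.
  - apply Hl. intros i; apply ival_bounds.
Qed.
Definition supI {I} (i0 : I) (uu : I -> I01) : I01 := exist _ _ (supI_pf i0 uu).

Lemma infset_spec {I} (i0 : I) (mu : I -> fuzzy) uu : (forall i, B01 (mu i)) ->
  (forall i, finf (infset mu uu) <= mu i (uu i)) /\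
  (forall b, (forall i, b <= mu i (uu i)) -> b <= finf (infset mu uu)) /\
  0 <= finf (infset mu uu) <= 1.
Proof.
  intros HB.
  destruct (finf_spec (infset mu uu) 0 (mu i0 (uu i0))) as [Hl Hg].
  - exists i0; reflexivity.
  - intros y [i ->]. apply HB.
  - split; [|split].
    + intros i; apply Hl; exists i; reflexivity.
    + intros b Hb; apply Hg; intros y [i ->]; auto.
    + split.
      * apply Hg. intros y [i ->]. apply HB.
      * pose proof (Hl _ (ex_intro _ i0 eq_refl)). pose proof (HB i0 (uu i0)). lra.
Qed.

Lemma bj_spec {I} (i0 : I) (mu : I -> fuzzy) v : (forall i, B01 (mu i)) ->
  (forall uu, fsup (supset uu) = ival v -> finf (infset mu uu) <= fbigjoin mu v) /\
  (forall r, r < fbigjoin mu v -> exists uu, fsup (supset uu) = ival v /\ forall i, r < mu i (uu i)) /\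
  0 <= fbigjoin mu v <= 1.
Proof.
  intros HB.
  set (E := fun r => exists uu : I -> I01, fsup (supset uu) = ival v /\ r = finf (infset mu uu)).
  change (fbigjoin mu v) with (fsup E).
  assert (Hc : fsup (supset (fun _ : I => v)) = ival v).
  { apply (supset_eq_iff i0). split; [intros; lra | intros b Hb; apply (Hb i0)]. }
  assert (HE0 : E (finf (infset mu (fun _ => v)))) by (exists (fun _ => v); auto).
  assert (Hm : forall y, E y -> y <= 1).
  { intros y [uu [_ ->]]. destruct (infset_spec i0 mu uu HB) as [_ [_ H]]. lra. }
  destruct (fsup_spec E 1 _ HE0 Hm) as [Hu Hl].
  split; [|split].
  - intros uu Huu. apply Hu. exists uu; auto.
  - intros r Hr. destruct (fsup_wit E 1 _ r HE0 Hm Hr) as [x [[uu [Huu ->]] Hx]].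
    exists uu; split; auto. intros i.
    destruct (infset_spec i0 mu uu HB) as [H _]. specialize (H i). lra.
  - split.
    + destruct (infset_spec i0 mu (fun _ => v) HB) as [_ [_ H]]. specialize (Hu _ HE0). lra.
    + apply Hl. auto.
Qed.

Lemma meet_spec f g v : B01 f -> B01 g ->
  (forall u w, Rmin (ival u) (ival w) = ival v -> Rmin (f u) (g w) <= fmeet f g v) /\
  (forall r, r < fmeet f g v -> exists u w, Rmin (ival u) (ival w) = ival v /\ r < f u /\ r < g w) /\
  (forall b, (forall u w, Rmin (ival u) (ival w) = ival v -> Rmin (f u) (g w) <= b) -> fmeet f g v <= b) /\
  0 <= fmeet f g v <= 1.
Proof.
  intros Hf Hg. unfold fmeet.
  set (E := fun r => exists u w : I01, Rmin (ival u) (ival w) = ival v /\ r = Rmin (f u) (g w)).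
  assert (HE0 : E (Rmin (f v) (g v))) by (exists v, v; split; [mm | reflexivity]).
  assert (Hm : forall y, E y -> y <= 1).
  { intros y [u [w [_ ->]]]. specialize (Hf u). specialize (Hg w). mm. }
  destruct (fsup_spec E 1 _ HE0 Hm) as [Hu Hl].
  split; [|split; [|split]].
  - intros u w H. apply Hu. exists u, w; auto.
  - intros r Hr. destruct (fsup_wit E 1 _ r HE0 Hm Hr) as [x [[u [w [Huw ->]]] Hx]].
    exists u, w. split; auto. split; mm.
  - intros b Hb. apply Hl. intros y [u [w [H ->]]]. auto.
  - split.
    + specialize (Hu _ HE0). specialize (Hf v); specialize (Hg v). mm.
    + apply Hl; auto.
Qed.

Lemma join_spec f g v : B01 f -> B01 g ->
  (forall u w, Rmax (ival u) (ival w) = ival v -> Rmin (f u) (g w) <= fjoin f g v) /\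
  (forall r, r < fjoin f g v -> exists u w, Rmax (ival u) (ival w) = ival v /\ r < f u /\ r < g w) /\
  (forall b, (forall u w, Rmax (ival u) (ival w) = ival v -> Rmin (f u) (g w) <= b) -> fjoin f g v <= b) /\
  0 <= fjoin f g v <= 1.
Proof.
  intros Hf Hg. unfold fjoin.
  set (E := fun r => exists u w : I01, Rmax (ival u) (ival w) = ival v /\ r = Rmin (f u) (g w)).
  assert (HE0 : E (Rmin (f v) (g v))) by (exists v, v; split; [mm | reflexivity]).
  assert (Hm : forall y, E y -> y <= 1).
  { intros y [u [w [_ ->]]]. specialize (Hf u). specialize (Hg w). mm. }
  destruct (fsup_spec E 1 _ HE0 Hm) as [Hu Hl].
  split; [|split; [|split]].
  - intros u w H. apply Hu. exists u, w; auto.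
  - intros r Hr. destruct (fsup_wit E 1 _ r HE0 Hm Hr) as [x [[u [w [Huw ->]]] Hx]].
    exists u, w. split; auto. split; mm.
  - intros b Hb. apply Hl. intros y [u [w [H ->]]]. auto.
  - split.
    + specialize (Hu _ HE0). specialize (Hf v); specialize (Hg v). mm.
    + apply Hl; auto.
Qed.

Lemma meet_ge f g u w v : B01 f -> B01 g -> Rmin (ival u) (ival w) = ival v -> Rmin (f u) (g w) <= fmeet f g v.
Proof. intros Hf Hg; apply (meet_spec f g v Hf Hg). Qed.
Lemma meet_wit f g v r : B01 f -> B01 g -> r < fmeet f g v -> exists u w, Rmin (ival u) (ival w) = ival v /\ r < f u /\ r < g w.
Proof. intros Hf Hg; apply (meet_spec f g v Hf Hg). Qed.
Lemma join_ge f g u w v : B01 f -> B01 g -> Rmax (ival u) (ival w) = ival v -> Rmin (f u) (g w) <= fjoin f g v.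
Proof. intros Hf Hg; apply (join_spec f g v Hf Hg). Qed.
Lemma join_wit f g v r : B01 f -> B01 g -> r < fjoin f g v -> exists u w, Rmax (ival u) (ival w) = ival v /\ r < f u /\ r < g w.
Proof. intros Hf Hg; apply (join_spec f g v Hf Hg). Qed.
Lemma meet_B01 f g : B01 f -> B01 g -> B01 (fmeet f g).
Proof. intros Hf Hg v; apply (meet_spec f g v Hf Hg). Qed.
Lemma join_B01 f g : B01 f -> B01 g -> B01 (fjoin f g).
Proof. intros Hf Hg v; apply (join_spec f g v Hf Hg). Qed.

#[export] Hint Resolve meet_B01 join_B01 : b01.

Lemma fle_iff f g : B01 f -> B01 g ->
  fle f g <-> ((forall v u, ival v <= ival u -> Rmin (f u) (g v) <= f v) /\
               (forall v r, r < f v -> exists w, ival v <= ival w /\ r < g w)).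
Proof.
  intros Hf Hg. split.
  - intros H. assert (E : forall v, fmeet f g v = f v) by (intros v; rewrite H; reflexivity).
    split.
    + intros v u Hvu. rewrite <- (E v). apply meet_ge; auto. mm.
    + intros v r Hr. rewrite <- (E v) in Hr. destruct (meet_wit f g v r Hf Hg Hr) as [u [w [H1 [H2 H3]]]].
      exists w. split; auto. mm.
  - intros [O1 O2]. unfold fle. extensionality v. apply Rle_antisym.
    + apply (meet_spec f g v Hf Hg). intros u w H.
      destruct (Rle_dec (ival u) (ival w)).
      * assert (u = v) by (apply ival_inj; mm). subst. apply Rmin_l.
      * assert (w = v) by (apply ival_inj; mm). subst. apply O1. mm.
    + apply le_by_r. intros r Hr. destruct (O2 v r Hr) as [w [H1 H2]].
      apply Rle_trans with (Rmin (f v) (g w)). apply rmin_ge; lra.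
      apply meet_ge; auto. mm.
Qed.

Lemma meet_comm_le f g v : B01 f -> B01 g -> fmeet f g v <= fmeet g f v.
Proof.
  intros Hf Hg. apply le_by_r. intros r Hr.
  destruct (meet_wit f g v r Hf Hg Hr) as [u [w [H1 [H2 H3]]]].
  apply Rle_trans with (Rmin (g w) (f u)). apply rmin_ge; lra.
  apply meet_ge; auto. rewrite Rmin_comm; auto.
Qed.

Lemma meet_comm f g : B01 f -> B01 g -> fmeet f g = fmeet g f.
Proof. intros; extensionality v; apply Rle_antisym; apply meet_comm_le; auto. Qed.

Lemma meet_assoc f g h : B01 f -> B01 g -> B01 h -> fmeet (fmeet f g) h = fmeet f (fmeet g h).
Proof.
  intros Hf Hg Hh. extensionality v. apply Rle_antisym; apply le_by_r; intros r Hr.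
  - destruct (meet_wit _ _ v r (meet_B01 f g Hf Hg) Hh Hr) as [p [z [H1 [H2 H3]]]].
    destruct (meet_wit _ _ p r Hf Hg H2) as [x [y [H4 [H5 H6]]]].
    assert (Hq : r <= fmeet g h (minI y z)).
    { apply Rle_trans with (Rmin (g y) (h z)). apply rmin_ge; lra. apply meet_ge; auto. }
    apply Rle_trans with (Rmin (f x) (fmeet g h (minI y z))). apply rmin_ge; lra.
    apply meet_ge; auto with b01. simpl. mm.
  - destruct (meet_wit _ _ v r Hf (meet_B01 g h Hg Hh) Hr) as [x [q [H1 [H2 H3]]]].
    destruct (meet_wit _ _ q r Hg Hh H3) as [y [z [H4 [H5 H6]]]].
    assert (Hq : r <= fmeet f g (minI x y)).
    { apply Rle_trans with (Rmin (f x) (g y)). apply rmin_ge; lra. apply meet_ge; auto. }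
    apply Rle_trans with (Rmin (fmeet f g (minI x y)) (h z)). apply rmin_ge; lra.
    apply meet_ge; auto with b01. simpl. mm.
Qed.

Lemma meet_idem f : B01 f -> fmeet f f = f.
Proof.
  intros Hf. extensionality v. apply Rle_antisym.
  - apply le_by_r. intros r Hr. destruct (meet_wit _ _ v r Hf Hf Hr) as [u [w [H1 [H2 H3]]]].
    destruct (Rle_dec (ival u) (ival w)).
    + assert (u = v) by (apply ival_inj; mm). subst; lra.
    + assert (w = v) by (apply ival_inj; mm). subst; lra.
  - apply Rle_trans with (Rmin (f v) (f v)). mm. apply meet_ge; auto. mm.
Qed.

Lemma meet_dist_self a b c : B01 a -> B01 b -> B01 c ->
  fmeet (fmeet a b) c = fmeet (fmeet a c) (fmeet b c).
Proof.
  intros Ha Hb Hc.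
  rewrite (meet_assoc a c (fmeet b c)) by auto with b01.
  rewrite (meet_comm b c) by auto.
  rewrite <- (meet_assoc c c b) by auto.
  rewrite (meet_idem c) by auto.
  rewrite (meet_comm c b) by auto.
  rewrite <- meet_assoc by auto. reflexivity.
Qed.

Lemma meet_interchange a b c d : B01 a -> B01 b -> B01 c -> B01 d ->
  fmeet (fmeet a b) (fmeet c d) = fmeet (fmeet a c) (fmeet b d).
Proof.
  intros Ha Hb Hc Hd.
  rewrite (meet_assoc a b) by auto with b01.
  rewrite <- (meet_assoc b c d) by auto.
  rewrite (meet_comm b c) by auto.
  rewrite (meet_assoc c b d) by auto.
  rewrite <- (meet_assoc a c) by auto with b01.
  reflexivity.
Qed.

Definition LB01 {Sigma} (K : lang Sigma) := forall s, B01 (K s).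

Lemma pr_B01 {Sigma} (K : lang Sigma) : LB01 K -> LB01 (pr K).
Proof. intros H s v. unfold pr. apply (bj_spec nil (fun u => K (s ++ u)) v). intros; apply H. Qed.

Lemma cvx_meet f g : B01 f -> B01 g -> cvx f -> cvx g -> cvx (fmeet f g).
Proof.
  intros Hf Hg Cf Cg v1 v v2 Hv. apply le_by_r. intros r Hr.
  assert (Hr1 : r < fmeet f g v1) by mm. assert (Hr2 : r < fmeet f g v2) by mm.
  destruct (meet_wit _ _ _ r Hf Hg Hr1) as [x1 [w1 [E1 [A1 B1]]]].
  destruct (meet_wit _ _ _ r Hf Hg Hr2) as [x2 [w2 [E2 [A2 B2]]]].
  destruct (Rle_dec (ival x1) (ival v)).
  - assert (Hfv : r <= f v).
    { apply Rle_trans with (Rmin (f x1) (f x2)). apply rmin_ge; lra. apply Cf. split; mm. }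
    apply Rle_trans with (Rmin (f v) (g w2)). apply rmin_ge; lra. apply meet_ge; auto. mm.
  - assert (Hgv : r <= g v).
    { apply Rle_trans with (Rmin (g w1) (g w2)). apply rmin_ge; lra. apply Cg. split; mm. }
    apply Rle_trans with (Rmin (f x1) (g v)). apply rmin_ge; lra. apply meet_ge; auto. mm.
Qed.

Lemma cvx_bj {I} (i0 : I) (mu : I -> fuzzy) : (forall i, B01 (mu i)) -> (forall i, cvx (mu i)) ->
  cvx (fbigjoin mu).
Proof.
  intros HB HC v1 v v2 Hv. apply le_by_r. intros r Hr.
  assert (Hr1 : r < fbigjoin mu v1) by mm. assert (Hr2 : r < fbigjoin mu v2) by mm.
  destruct (bj_spec i0 mu v1 HB) as [_ [W1 _]]. destruct (W1 r Hr1) as [x [Sx Vx]].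
  destruct (bj_spec i0 mu v2 HB) as [_ [W2 _]]. destruct (W2 r Hr2) as [y [Sy Vy]].
  apply (supset_eq_iff i0) in Sx. apply (supset_eq_iff i0) in Sy.
  destruct Sx as [Sx1 Sx2]. destruct Sy as [Sy1 Sy2].
  set (z := fun i => minI (y i) v).
  assert (Sz : fsup (supset z) = ival v).
  { apply (supset_eq_iff i0). split.
    - intros i; simpl; mm.
    - intros b Hb. apply Rnot_lt_le. intro Hbv.
      assert (forall i, ival (y i) <= b).
      { intros i. specialize (Hb i). simpl in Hb. mm. }
      specialize (Sy2 b H). lra. }
  destruct (bj_spec i0 mu v HB) as [G _].
  apply Rle_trans with (finf (infset mu z)); [|apply G; auto].
  destruct (infset_spec i0 mu z HB) as [_ [H _]]. apply H.
  intros i. destruct (Rle_dec (ival (y i)) (ival v)).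
  - assert (z i = y i) by (apply ival_inj; simpl; mm). rewrite H0. specialize (Vy i); lra.
  - apply Rle_trans with (Rmin (mu i (x i)) (mu i (y i))).
    + specialize (Vx i); specialize (Vy i). apply rmin_ge; lra.
    + apply HC. specialize (Sx1 i). simpl. split; mm.
Qed.

Lemma pr_cvx {Sigma} (K : lang Sigma) : LB01 K -> (forall s, cvx (K s)) -> forall s, cvx (pr K s).
Proof. intros HB HC s. unfold pr. apply (cvx_bj nil); intros; auto. Qed.

Lemma distrib a b c : B01 a -> B01 b -> B01 c -> cvx c ->
  fmeet (fjoin a b) c = fjoin (fmeet a c) (fmeet b c).
Proof.
  intros Ha Hb Hc Cc. extensionality v. apply Rle_antisym; apply le_by_r; intros r Hr.
  - destruct (meet_wit _ _ v r (join_B01 a b Ha Hb) Hc Hr) as [p [w [E1 [A1 B1]]]].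
    destruct (join_wit _ _ p r Ha Hb A1) as [x [y [E2 [A2 B2]]]].
    destruct (Rle_dec (ival y) (ival x)).
    + assert (H1 : r <= fmeet a c v).
      { apply Rle_trans with (Rmin (a x) (c w)). apply rmin_ge; lra. apply meet_ge; auto. mm. }
      assert (H2 : r <= fmeet b c (minI y w)).
      { apply Rle_trans with (Rmin (b y) (c w)). apply rmin_ge; lra. apply meet_ge; auto. }
      apply Rle_trans with (Rmin (fmeet a c v) (fmeet b c (minI y w))). apply rmin_ge; lra.
      apply join_ge; auto with b01. simpl. mm.
    + assert (H1 : r <= fmeet b c v).
      { apply Rle_trans with (Rmin (b y) (c w)). apply rmin_ge; lra. apply meet_ge; auto. mm. }
      assert (H2 : r <= fmeet a c (minI x w)).
      { apply Rle_trans with (Rmin (a x) (c w)). apply rmin_ge; lra. apply meet_ge; auto. }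
      apply Rle_trans with (Rmin (fmeet a c (minI x w)) (fmeet b c v)). apply rmin_ge; lra.
      apply join_ge; auto with b01. simpl. mm.
  - destruct (join_wit _ _ v r (meet_B01 a c Ha Hc) (meet_B01 b c Hb Hc) Hr) as [p [q [E1 [A1 B1]]]].
    destruct (meet_wit _ _ p r Ha Hc A1) as [x [w1 [E2 [A2 B2]]]].
    destruct (meet_wit _ _ q r Hb Hc B1) as [y [w2 [E3 [A3 B3]]]].
    assert (Hj : r <= fjoin a b (maxI x y)).
    { apply Rle_trans with (Rmin (a x) (b y)). apply rmin_ge; lra. apply join_ge; auto. }
    destruct (Rle_dec (ival q) (ival p)).
    + destruct (Rle_dec (ival x) (ival w1)).
      * destruct (Rle_dec (ival y) (ival v)).
        -- assert (Hj' : r <= fjoin a b v).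
           { apply Rle_trans with (Rmin (a x) (b y)). apply rmin_ge; lra. apply join_ge; auto. mm. }
           apply Rle_trans with (Rmin (fjoin a b v) (c w1)). apply rmin_ge; lra.
           apply meet_ge; auto with b01. mm.
        -- assert (Hcv : r <= c v).
           { apply Rle_trans with (Rmin (c w2) (c w1)). apply rmin_ge; lra. apply Cc. split; mm. }
           apply Rle_trans with (Rmin (fjoin a b (maxI x y)) (c v)). apply rmin_ge; lra.
           apply meet_ge; auto with b01. simpl. mm.
      * apply Rle_trans with (Rmin (fjoin a b (maxI x y)) (c w1)). apply rmin_ge; lra.
        apply meet_ge; auto with b01. simpl. mm.
    + destruct (Rle_dec (ival y) (ival w2)).
      * destruct (Rle_dec (ival x) (ival v)).
        -- assert (Hj' : r <= fjoin a b v).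
           { apply Rle_trans with (Rmin (a x) (b y)). apply rmin_ge; lra. apply join_ge; auto. mm. }
           apply Rle_trans with (Rmin (fjoin a b v) (c w2)). apply rmin_ge; lra.
           apply meet_ge; auto with b01. mm.
        -- assert (Hcv : r <= c v).
           { apply Rle_trans with (Rmin (c w1) (c w2)). apply rmin_ge; lra. apply Cc. split; mm. }
           apply Rle_trans with (Rmin (fjoin a b (maxI x y)) (c v)). apply rmin_ge; lra.
           apply meet_ge; auto with b01. simpl. mm.
      * apply Rle_trans with (Rmin (fjoin a b (maxI x y)) (c w2)). apply rmin_ge; lra.
        apply meet_ge; auto with b01. simpl. mm.
Qed.

Lemma join_mono f1 f2 g1 g2 : B01 f1 -> B01 f2 -> B01 g1 -> B01 g2 -> cvx f1 -> cvx f2 ->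
  fle f1 g1 -> fle f2 g2 -> fle (fjoin f1 f2) (fjoin g1 g2).
Proof.
  intros B1 B2 B3 B4 C1 C2 L1 L2.
  apply (fle_iff f1 g1 B1 B3) in L1. destruct L1 as [O11 O21].
  apply (fle_iff f2 g2 B2 B4) in L2. destruct L2 as [O12 O22].
  apply fle_iff; auto with b01. split.
  - intros v u Hvu. apply le_by_r. intros r Hr.
    assert (Hr1 : r < fjoin f1 f2 u) by mm. assert (Hr2 : r < fjoin g1 g2 v) by mm.
    destruct (join_wit _ _ _ r B1 B2 Hr1) as [x [y [E1 [A1 A2]]]].
    destruct (join_wit _ _ _ r B3 B4 Hr2) as [p [q [E2 [A3 A4]]]].
    assert (Ha1 : exists a1, ival a1 <= ival v /\ r < f1 a1).
    { destruct (Rle_dec (ival x) (ival v)). exists x; auto.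
      exists p. split. mm. assert (Rmin (f1 x) (g1 p) <= f1 p) by (apply O11; mm). mm. }
    assert (Ha2 : exists a2, ival a2 <= ival v /\ r < f2 a2).
    { destruct (Rle_dec (ival y) (ival v)). exists y; auto.
      exists q. split. mm. assert (Rmin (f2 y) (g2 q) <= f2 q) by (apply O12; mm). mm. }
    destruct Ha1 as [a1 [Ha1 Hb1]]. destruct Ha2 as [a2 [Ha2 Hb2]].
    destruct (Rle_dec (ival v) (ival x)).
    + assert (Rmin (f1 a1) (f1 x) <= f1 v) by (apply C1; lra).
      apply Rle_trans with (Rmin (f1 v) (f2 a2)). apply rmin_ge; mm. apply join_ge; auto. mm.
    + assert (Rmin (f2 a2) (f2 y) <= f2 v) by (apply C2; split; mm).
      apply Rle_trans with (Rmin (f1 a1) (f2 v)). apply rmin_ge; mm. apply join_ge; auto. mm.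
  - intros v r Hr. destruct (join_wit _ _ _ r B1 B2 Hr) as [x [y [E1 [A1 A2]]]].
    destruct (O21 x r A1) as [w1 [H1 H2]]. destruct (O22 y r A2) as [w2 [H3 H4]].
    exists (maxI w1 w2). split. simpl; mm.
    apply Rlt_le_trans with (Rmin (g1 w1) (g2 w2)). mm. apply join_ge; auto.
Qed.

Lemma join_le_M A B M : B01 A -> B01 B -> B01 M -> fle A M -> fle B M -> fle (fjoin A B) M.
Proof.
  intros BA BB BM LA LB.
  apply (fle_iff A M BA BM) in LA. destruct LA as [O1A O2A].
  apply (fle_iff B M BB BM) in LB. destruct LB as [O1B O2B].
  apply fle_iff; auto with b01. split.
  - intros v u Hvu. apply le_by_r. intros r Hr.
    assert (Hr1 : r < fjoin A B u) by mm. assert (Hr2 : r < M v) by mm.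
    destruct (join_wit _ _ _ r BA BB Hr1) as [x [y [E1 [A1 A2]]]].
    destruct (Rle_dec (ival y) (ival x)).
    + assert (Rmin (A x) (M v) <= A v) by (apply O1A; mm).
      destruct (Rle_dec (ival y) (ival v)).
      * apply Rle_trans with (Rmin (A v) (B y)). apply rmin_ge; mm. apply join_ge; auto. mm.
      * assert (Rmin (B y) (M v) <= B v) by (apply O1B; mm).
        apply Rle_trans with (Rmin (A v) (B v)). apply rmin_ge; mm. apply join_ge; auto. mm.
    + assert (Rmin (B y) (M v) <= B v) by (apply O1B; mm).
      destruct (Rle_dec (ival x) (ival v)).
      * apply Rle_trans with (Rmin (A x) (B v)). apply rmin_ge; mm. apply join_ge; auto. mm.
      * assert (Rmin (A x) (M v) <= A v) by (apply O1A; mm).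
        apply Rle_trans with (Rmin (A v) (B v)). apply rmin_ge; mm. apply join_ge; auto. mm.
  - intros v r Hr. destruct (join_wit _ _ _ r BA BB Hr) as [x [y [E1 [A1 A2]]]].
    destruct (Rle_dec (ival y) (ival x)).
    + destruct (O2A x r A1) as [w [H1 H2]]. exists w. split; auto. mm.
    + destruct (O2B y r A2) as [w [H1 H2]]. exists w. split; auto. mm.
Qed.

Lemma pr_union {Sigma} (K1 K2 : lang Sigma) : LB01 K1 -> LB01 K2 ->
  pr (lunion K1 K2) = lunion (pr K1) (pr K2).
Proof.
  intros H1 H2. extensionality s. extensionality v.
  assert (HJ : forall u, B01 (lunion K1 K2 (s ++ u))) by (intros u; unfold lunion; auto with b01).
  assert (HP1 := pr_B01 K1 H1 s). assert (HP2 := pr_B01 K2 H2 s).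
  apply Rle_antisym; apply le_by_r; intros r Hr.
  - unfold pr at 1 in Hr.
    destruct (bj_spec nil _ v HJ) as [_ [W _]]. destruct (W r Hr) as [uu [Su Vu]].
    apply (supset_eq_iff nil) in Su. destruct Su as [Su1 Su2].
    assert (Hc : forall u, exists pq : I01 * I01, Rmax (ival (fst pq)) (ival (snd pq)) = ival (uu u)
               /\ r < K1 (s ++ u) (fst pq) /\ r < K2 (s ++ u) (snd pq)).
    { intros u. destruct (join_wit _ _ _ r (H1 _) (H2 _) (Vu u)) as [p [q Hpq]]. exists (p, q); exact Hpq. }
    apply choice_ex in Hc. destruct Hc as [F HF].
    set (pp := fun u => fst (F u)). set (qq := fun u => snd (F u)).
    set (P := supI nil pp). set (Q := supI nil qq).
    destruct (supset_spec nil pp) as [Sp1 Sp2]. destruct (supset_spec nil qq) as [Sq1 Sq2].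
    assert (HA : r <= pr K1 s P).
    { destruct (bj_spec nil (fun u => K1 (s ++ u)) P (fun u => H1 _)) as [G _].
      apply Rle_trans with (finf (infset (fun u => K1 (s ++ u)) pp)); [|apply G; reflexivity].
      destruct (infset_spec nil (fun u => K1 (s ++ u)) pp (fun u => H1 _)) as [_ [G2 _]].
      apply G2. intros u. destruct (HF u) as [_ [X _]]. unfold pp. lra. }
    assert (HB : r <= pr K2 s Q).
    { destruct (bj_spec nil (fun u => K2 (s ++ u)) Q (fun u => H2 _)) as [G _].
      apply Rle_trans with (finf (infset (fun u => K2 (s ++ u)) qq)); [|apply G; reflexivity].
      destruct (infset_spec nil (fun u => K2 (s ++ u)) qq (fun u => H2 _)) as [_ [G2 _]].
      apply G2. intros u. destruct (HF u) as [_ [_ X]]. unfold qq. lra. }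
    assert (HPv : ival P <= ival v).
    { apply Sp2. intros u. specialize (Su1 u). destruct (HF u) as [X _]. unfold pp. mm. }
    assert (HQv : ival Q <= ival v).
    { apply Sq2. intros u. specialize (Su1 u). destruct (HF u) as [X _]. unfold qq. mm. }
    assert (HvPQ : ival v <= Rmax (ival P) (ival Q)).
    { apply Su2. intros u. specialize (Sp1 u). specialize (Sq1 u). destruct (HF u) as [X _].
      unfold pp, qq in *. simpl. mm. }
    unfold lunion. apply Rle_trans with (Rmin (pr K1 s P) (pr K2 s Q)). apply rmin_ge; lra.
    apply join_ge; auto. mm.
  - unfold lunion in Hr. destruct (join_wit _ _ _ r HP1 HP2 Hr) as [p [q [E1 [A1 A2]]]].
    destruct (bj_spec nil (fun u => K1 (s ++ u)) p (fun u => H1 _)) as [_ [W1 _]].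
    destruct (W1 r A1) as [x [Sx Vx]].
    destruct (bj_spec nil (fun u => K2 (s ++ u)) q (fun u => H2 _)) as [_ [W2 _]].
    destruct (W2 r A2) as [y [Sy Vy]].
    apply (supset_eq_iff nil) in Sx. destruct Sx as [Sx1 Sx2].
    apply (supset_eq_iff nil) in Sy. destruct Sy as [Sy1 Sy2].
    set (z := fun u => maxI (x u) (y u)).
    assert (Sz : fsup (supset z) = ival v).
    { apply (supset_eq_iff nil). split.
      - intros u. specialize (Sx1 u). specialize (Sy1 u). simpl. mm.
      - intros b Hb. assert (ival p <= b). { apply Sx2. intros u. specialize (Hb u). simpl in Hb. mm. }
        assert (ival q <= b). { apply Sy2. intros u. specialize (Hb u). simpl in Hb. mm. }
        mm. }
    destruct (bj_spec nil _ v HJ) as [G _].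
    unfold pr at 1. apply Rle_trans with (finf (infset (fun u => lunion K1 K2 (s ++ u)) z)); [|apply G; auto].
    destruct (infset_spec nil (fun u => lunion K1 K2 (s ++ u)) z HJ) as [_ [G2 _]].
    apply G2. intros u. unfold lunion.
    apply Rle_trans with (Rmin (K1 (s ++ u) (x u)) (K2 (s ++ u) (y u))).
    specialize (Vx u); specialize (Vy u); apply rmin_ge; lra.
    apply join_ge; auto.
Qed.

Lemma pr_inter_closed {Sigma} (K1 K2 : lang Sigma) :
  (forall s, is_NCFD (K1 s)) -> (forall s, is_NCFD (K2 s)) -> pr K1 = K1 -> pr K2 = K2 ->
  pr (linter K1 K2) = linter K1 K2.
Proof.
  intros N1 N2 E1 E2.
  assert (H1 : LB01 K1) by (intros s; exact (proj1 (N1 s))). assert (H2 : LB01 K2) by (intros s; exact (proj1 (N2 s))).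
  extensionality s. extensionality v.
  assert (HJ : forall u, B01 (linter K1 K2 (s ++ u))) by (intros u; unfold linter; auto with b01).
  assert (EA : forall w, K1 s w = pr K1 s w) by (intros; rewrite E1; reflexivity).
  assert (EB : forall w, K2 s w = pr K2 s w) by (intros; rewrite E2; reflexivity).
  apply Rle_antisym; apply le_by_r; intros r Hr.
  - unfold pr at 1 in Hr.
    destruct (bj_spec nil _ v HJ) as [_ [W _]]. destruct (W r Hr) as [uu [Su Vu]].
    apply (supset_eq_iff nil) in Su. destruct Su as [Su1 Su2].
    assert (Hc : forall u, exists pq : I01 * I01, Rmin (ival (fst pq)) (ival (snd pq)) = ival (uu u)
               /\ r < K1 (s ++ u) (fst pq) /\ r < K2 (s ++ u) (snd pq)).
    { intros u. destruct (meet_wit _ _ _ r (H1 _) (H2 _) (Vu u)) as [p [q Hpq]]. exists (p, q); exact Hpq. }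
    apply choice_ex in Hc. destruct Hc as [F HF].
    set (pp := fun u => fst (F u)). set (qq := fun u => snd (F u)).
    set (P := supI nil pp). set (Q := supI nil qq).
    destruct (supset_spec nil pp) as [Sp1 Sp2]. destruct (supset_spec nil qq) as [Sq1 Sq2].
    assert (HA : r <= K1 s P).
    { rewrite EA. destruct (bj_spec nil (fun u => K1 (s ++ u)) P (fun u => H1 _)) as [G _].
      apply Rle_trans with (finf (infset (fun u => K1 (s ++ u)) pp)); [|apply G; reflexivity].
      destruct (infset_spec nil (fun u => K1 (s ++ u)) pp (fun u => H1 _)) as [_ [G2 _]].
      apply G2. intros u. destruct (HF u) as [_ [X _]]. unfold pp. lra. }
    assert (HB : r <= K2 s Q).
    { rewrite EB. destruct (bj_spec nil (fun u => K2 (s ++ u)) Q (fun u => H2 _)) as [G _].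
      apply Rle_trans with (finf (infset (fun u => K2 (s ++ u)) qq)); [|apply G; reflexivity].
      destruct (infset_spec nil (fun u => K2 (s ++ u)) qq (fun u => H2 _)) as [_ [G2 _]].
      apply G2. intros u. destruct (HF u) as [_ [_ X]]. unfold qq. lra. }
    assert (HvP : ival v <= ival P).
    { apply Su2. intros u. apply Rle_trans with (ival (pp u)); [|exact (Sp1 u)].
      destruct (HF u) as [X _]. unfold pp. mm. }
    assert (HvQ : ival v <= ival Q).
    { apply Su2. intros u. apply Rle_trans with (ival (qq u)); [|exact (Sq1 u)].
      destruct (HF u) as [X _]. unfold qq. mm. }
    destruct (HF nil) as [X0 [Y0 Z0]]. rewrite app_nil_r in Y0, Z0.
    specialize (Su1 nil).
    destruct N1 with s as [_ [_ C1]]. destruct N2 with s as [_ [_ C2]].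
    unfold linter. destruct (Rle_dec (ival (fst (F nil))) (ival (snd (F nil)))).
    + assert (Rmin (K1 s (fst (F nil))) (K1 s P) <= K1 s v) by (apply C1; split; mm).
      apply Rle_trans with (Rmin (K1 s v) (K2 s Q)). apply rmin_ge; mm. apply meet_ge; auto. mm.
    + assert (Rmin (K2 s (snd (F nil))) (K2 s Q) <= K2 s v) by (apply C2; split; mm).
      apply Rle_trans with (Rmin (K1 s P) (K2 s v)). apply rmin_ge; mm. apply meet_ge; auto. mm.
  - unfold linter in Hr. destruct (meet_wit _ _ _ r (H1 s) (H2 s) Hr) as [p [q [E0 [A1 A2]]]].
    rewrite EA in A1. rewrite EB in A2.
    destruct (bj_spec nil (fun u => K1 (s ++ u)) p (fun u => H1 _)) as [_ [W1 _]].
    destruct (W1 r A1) as [x [Sx Vx]].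
    destruct (bj_spec nil (fun u => K2 (s ++ u)) q (fun u => H2 _)) as [_ [W2 _]].
    destruct (W2 r A2) as [y [Sy Vy]].
    apply (supset_eq_iff nil) in Sx. destruct Sx as [Sx1 Sx2].
    apply (supset_eq_iff nil) in Sy. destruct Sy as [Sy1 Sy2].
    set (z := fun u : list Sigma => match u with nil => v | _ => minI (x u) (y u) end).
    assert (Sz : fsup (supset z) = ival v).
    { apply (supset_eq_iff nil). split.
      - intros [|c u]. simpl; lra. specialize (Sx1 (c :: u)). specialize (Sy1 (c :: u)). simpl. mm.
      - intros b Hb. exact (Hb nil). }
    destruct (bj_spec nil _ v HJ) as [G _].
    unfold pr at 1. apply Rle_trans with (finf (infset (fun u => linter K1 K2 (s ++ u)) z)); [|apply G; auto].
    destruct (infset_spec nil (fun u => linter K1 K2 (s ++ u)) z HJ) as [_ [G2 _]].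
    apply G2. intros [|c u]; unfold linter.
    + simpl. rewrite app_nil_r. lra.
    + apply Rle_trans with (Rmin (K1 (s ++ c :: u) (x (c :: u))) (K2 (s ++ c :: u) (y (c :: u)))).
      specialize (Vx (c :: u)); specialize (Vy (c :: u)); apply rmin_ge; lra.
      apply meet_ge; auto.
Qed.

Lemma part3 {Sigma} (Suc : Sigma -> fuzzy) (M K1 K2 : lang Sigma) :
  (forall a, B01 (Suc a)) -> LB01 M -> LB01 K1 -> LB01 K2 ->
  controllable M Suc K1 -> controllable M Suc K2 ->
  linter (pr K1) (pr K2) = pr (linter K1 K2) -> controllable M Suc (linter K1 K2).
Proof.
  intros BS BM B1 B2 [Hs1 Hc1] [Hs2 Hc2] H. split.
  - intros s. unfold fle, linter. specialize (Hs1 s). unfold fle in Hs1.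
    rewrite (meet_comm (K1 s) (K2 s)) by auto.
    rewrite meet_assoc by auto. rewrite Hs1. reflexivity.
  - intros s a. rewrite <- H. unfold linter.
    specialize (Hc1 s a). specialize (Hc2 s a). unfold fle in *.
    assert (P1 := pr_B01 K1 B1 s). assert (P2 := pr_B01 K2 B2 s).
    assert (Q1 := pr_B01 K1 B1 (s ++ a :: nil)). assert (Q2 := pr_B01 K2 B2 (s ++ a :: nil)).
    assert (S := BS a). assert (M' := BM (s ++ a :: nil)).
    rewrite (meet_assoc (pr K1 s)) in Hc1 by auto.
    rewrite (meet_assoc (pr K2 s)) in Hc2 by auto.
    rewrite (meet_assoc (fmeet (pr K1 s) (pr K2 s))) by auto with b01.
    rewrite (meet_dist_self (pr K1 s) (pr K2 s)) by auto with b01.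
    rewrite meet_interchange by auto with b01.
    rewrite Hc1, Hc2. reflexivity.
Qed.

Lemma part1 {Sigma} (Suc : Sigma -> fuzzy) (M K1 K2 : lang Sigma) :
  (forall a, is_NCFD (Suc a)) -> (forall s, is_NCFD (M s)) ->
  (forall s, is_NCFD (K1 s)) -> (forall s, is_NCFD (K2 s)) ->
  controllable M Suc K1 -> controllable M Suc K2 -> controllable M Suc (lunion K1 K2).
Proof.
  intros NS NM N1 N2 [Hs1 Hc1] [Hs2 Hc2].
  assert (B1 : LB01 K1) by (intros s; exact (proj1 (N1 s))).
  assert (B2 : LB01 K2) by (intros s; exact (proj1 (N2 s))).
  assert (BM : LB01 M) by (intros s; exact (proj1 (NM s))).
  assert (BS : forall a, B01 (Suc a)) by (intros a; exact (proj1 (NS a))).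
  assert (C1 : forall s, cvx (K1 s)) by (intros s; exact (proj2 (proj2 (N1 s)))).
  assert (C2 : forall s, cvx (K2 s)) by (intros s; exact (proj2 (proj2 (N2 s)))).
  assert (CM : forall s, cvx (M s)) by (intros s; exact (proj2 (proj2 (NM s)))).
  assert (CS : forall a, cvx (Suc a)) by (intros a; exact (proj2 (proj2 (NS a)))).
  split.
  - intros s. unfold lunion. apply join_le_M; auto.
  - intros s a. rewrite pr_union by auto. unfold lunion.
    assert (P1 := pr_B01 K1 B1 s). assert (P2 := pr_B01 K2 B2 s).
    assert (Q1 := pr_B01 K1 B1 (s ++ a :: nil)). assert (Q2 := pr_B01 K2 B2 (s ++ a :: nil)).
    assert (CP1 := pr_cvx K1 B1 C1 s). assert (CP2 := pr_cvx K2 B2 C2 s).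
    rewrite (distrib (pr K1 s) (pr K2 s) (Suc a)) by auto.
    rewrite distrib by auto with b01.
    apply join_mono; auto with b01.
    + apply cvx_meet; auto with b01. apply cvx_meet; auto.
    + apply cvx_meet; auto with b01. apply cvx_meet; auto.
Qed.

Theorem proposition5 (Sigma : Type) (Suc : Sigma -> fuzzy) (M K1 K2 : lang Sigma)
  (HSuc : forall a, is_NCFD (Suc a))
  (HM : forall s, is_NCFD (M s))
  (HMpr : pr M = M)
  (HK1 : forall s, is_NCFD (K1 s))
  (HK2 : forall s, is_NCFD (K2 s)) :
  (controllable M Suc K1 -> controllable M Suc K2 ->
     controllable M Suc (lunion K1 K2)) /\
  (pr K1 = K1 -> pr K2 = K2 -> pr (lunion K1 K2) = lunion K1 K2) /\
  (controllable M Suc K1 -> controllable M Suc K2 ->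
     linter (pr K1) (pr K2) = pr (linter K1 K2) ->
     controllable M Suc (linter K1 K2)) /\
  (pr K1 = K1 -> pr K2 = K2 ->
     controllable M Suc K1 -> controllable M Suc K2 ->
     linter (pr K1) (pr K2) = pr (linter K1 K2) /\
     controllable M Suc (linter K1 K2)).
Proof.
  assert (B1 : LB01 K1) by (intros s; exact (proj1 (HK1 s))).
  assert (B2 : LB01 K2) by (intros s; exact (proj1 (HK2 s))).
  assert (BM : LB01 M) by (intros s; exact (proj1 (HM s))).
  assert (BS : forall a, B01 (Suc a)) by (intros a; exact (proj1 (HSuc a))).
  split; [|split; [|split]].
  - apply part1; auto.
  - intros E1 E2. rewrite pr_union by auto. rewrite E1, E2. reflexivity.
  - apply part3; auto.
  - intros E1 E2 C1 C2.
    assert (E : linter (pr K1) (pr K2) = pr (linter K1 K2)).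
    { rewrite pr_inter_closed by auto. rewrite E1, E2. reflexivity. }
    split; auto. apply part3; auto.
Qed.
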